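(* Let $s_1,\dots,s_M\in\mathbb{R}^2_-$ be distinct points. The functions $g_l$ and $h_{l,q}$, $l=1,\dots,M$, $q=1,2$, defined on $\widehat{\mathbb{S}}$ by $g_l(\alpha)=Q(\alpha)\mathrm{e}^{-\mathrm{i}k_-\mathrm{v}(\alpha)\cdot s_l}$ and $h_{l,q}(\alpha)=(\mathbf{e}_q\cdot\mathrm{v}(\alpha))Q(\alpha)\mathrm{e}^{-\mathrm{i}k_-\mathrm{v}(\alpha)\cdot s_l}$, are linearly independent.
   Context: $k_\pm>0$ are the wavenumbers of the upper and lower half-planes $\mathbb{R}^2_\pm=\{\pm x_2>0\}$. $\theta_c=\arccos(k_-/k_+)$ if $k_+>k_-$ and $\theta_c=0$ if $k_+<k_-$; $\widehat{\mathbb{S}}=\{(\cos\theta,\sin\theta):\theta\in(\pi+\theta_c,2\pi-\theta_c)\}$. With $\mu=k_+/k_-$ and $\alpha=(\alpha_1,\alpha_2)$: $\mathrm{v}(\alpha)=(\mu\alpha_1,\mathrm{sign}(\alpha_2)\sqrt{1-\mu^2\alpha_1^2})$, $Q(\alpha)=\frac{2\mu\alpha_2}{\mu\alpha_2+\mathrm{v}_2(\alpha)}$. $\mathbf{e}_1,\mathbf{e}_2$ is the standard basis of $\mathbb{R}^2$. The points $s_l$ are the centers of well-separated particles, hence distinct. *)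

(* Defs.v *)
From Stdlib Require Import Reals Lra List.
From Coquelicot Require Import Coquelicot.
Open Scope R_scope.

Definition cexpi (x : R) : C := (cos x, sin x).

Definition sgn (x : R) : R :=
  if Rlt_dec 0 x then 1 else if Rlt_dec x 0 then -1 else 0.

Definition theta_c (kp km : R) : R :=
  if Rlt_dec km kp then acos (km / kp) else 0.

Definition Shat (kp km : R) (a : R * R) : Prop :=
  exists t : R, PI + theta_c kp km < t < 2 * PI - theta_c kp km /\
                a = (cos t, sin t).

Definition mu (kp km : R) : R := kp / km.

Definition vv (kp km : R) (a : R * R) : R * R :=
  (mu kp km * fst a,
   sgn (snd a) * sqrt (1 - (mu kp km) ^ 2 * (fst a) ^ 2)).

Definition QQ (kp km : R) (a : R * R) : R :=
  2 * mu kp km * snd a / (mu kp km * snd a + snd (vv kp km a)).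

Definition dot2 (x y : R * R) : R := fst x * fst y + snd x * snd y.

Definition g_fun (kp km : R) (sl : R * R) (a : R * R) : C :=
  Cmult (RtoC (QQ kp km a)) (cexpi (- (km * dot2 (vv kp km a) sl))).

Definition e_q (q : nat) : R * R := if Nat.eqb q 1 then (1, 0) else (0, 1).

Definition h_fun (kp km : R) (sl : R * R) (q : nat) (a : R * R) : C :=
  Cmult (RtoC (dot2 (e_q q) (vv kp km a))) (g_fun kp km sl a).

Definition Csum (M : nat) (f : nat -> C) : C :=
  fold_right Cplus (RtoC 0) (map f (seq 0 M)).

(* Main.v *)
Require Import Defs.
From Stdlib Require Import Reals Lra List ZArith Classical Lia.
From Coquelicot Require Import Coquelicot.
Open Scope R_scope.

Definition CD (F G : R -> C) (x : R) :=
  is_derive (fun t => fst (F t)) x (fst (G x)) /\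
  is_derive (fun t => snd (F t)) x (snd (G x)).

Lemma isd_val (f : R -> R) x l l' : is_derive f x l -> l = l' -> is_derive f x l'.
Proof. intros H <-; exact H. Qed.

Lemma CD_plus F1 G1 F2 G2 x : CD F1 G1 x -> CD F2 G2 x ->
  CD (fun t => Cplus (F1 t) (F2 t)) (fun t => Cplus (G1 t) (G2 t)) x.
Proof.
  intros [H1 H2] [H3 H4]; split; simpl.
  - apply (is_derive_plus _ _ _ _ _ H1 H3).
  - apply (is_derive_plus _ _ _ _ _ H2 H4).
Qed.

Lemma CD_ext F G F' G' x : (forall t, F t = F' t) -> G x = G' x -> CD F G x -> CD F' G' x.
Proof.
  intros HF HG [H1 H2]; split.
  - apply (is_derive_ext (fun t => fst (F t))); [intro t; now rewrite HF|]. rewrite <- HG; exact H1.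
  - apply (is_derive_ext (fun t => snd (F t))); [intro t; now rewrite HF|]. rewrite <- HG; exact H2.
Qed.

Lemma CD_zero x : CD (fun _ => RtoC 0) (fun _ => RtoC 0) x.
Proof. split; simpl; auto_derive; auto. Qed.

Lemma der_cos_comp psi x dpsi : is_derive psi x dpsi ->
  is_derive (fun t => cos (psi t)) x (- sin (psi x) * dpsi).
Proof.
  intros Hp. pose proof (is_derive_comp cos psi x _ _ (is_derive_cos (psi x)) Hp) as H.
  replace (- sin (psi x) * dpsi) with (scal dpsi (- sin (psi x))); [exact H|].
  unfold scal; simpl; unfold mult; simpl; ring.
Qed.

Lemma der_sin_comp psi x dpsi : is_derive psi x dpsi ->
  is_derive (fun t => sin (psi t)) x (cos (psi x) * dpsi).
Proof.
  intros Hp. pose proof (is_derive_comp sin psi x _ _ (is_derive_sin (psi x)) Hp) as H.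
  replace (cos (psi x) * dpsi) with (scal dpsi (cos (psi x))); [exact H|].
  unfold scal; simpl; unfold mult; simpl; ring.
Qed.

Lemma CD_atom (c : C) (psi : R -> R) (dpsi : R) x :
  is_derive psi x dpsi ->
  CD (fun t => Cmult c (cexpi (psi t))) (fun t => Cmult (Cmult c Ci) (Cmult (RtoC dpsi) (cexpi (psi x)))) x.
Proof.
  intros Hp. destruct c as [c1 c2]. unfold cexpi. 
  pose proof (der_cos_comp _ _ _ Hp) as Hc. pose proof (der_sin_comp _ _ _ Hp) as Hs.
  split; simpl.
  - pose proof (is_derive_minus _ _ _ _ _ (is_derive_scal _ _ c1 _ Hc) (is_derive_scal _ _ c2 _ Hs)) as H.
    eapply isd_val; [eapply is_derive_ext; [|exact H]|].
    + intro t; simpl; unfold minus, plus, opp; simpl; ring.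
    + unfold minus, plus, opp; simpl; ring.
  - pose proof (is_derive_plus _ _ _ _ _ (is_derive_scal _ _ c1 _ Hs) (is_derive_scal _ _ c2 _ Hc)) as H.
    eapply isd_val; [eapply is_derive_ext; [|exact H]|].
    + intro t; simpl; unfold plus; simpl; ring.
    + unfold plus; simpl; ring.
Qed.

Lemma CD_zero_on (F G : R -> C) a b x : (forall t, a < t < b -> F t = RtoC 0) -> a < x < b ->
  CD F G x -> G x = RtoC 0.
Proof.
  intros HF Hx [H1 H2].
  assert (Hloc : locally x (fun t => a < t < b)).
  { apply (locally_open (fun t => a < t /\ t < b)); auto.
    apply open_and; [apply open_gt|apply open_lt]. }
  assert (E1 : fst (G x) = 0).
  { assert (Hz : is_derive (fun t => fst (F t)) x 0).
    { apply (is_derive_ext_loc (fun _ => 0)).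
      - eapply filter_imp; [|exact Hloc]. intros t Ht; simpl. now rewrite (HF t Ht).
      - auto_derive; auto. }
    apply is_derive_unique in Hz. apply is_derive_unique in H1. congruence. }
  assert (E2 : snd (G x) = 0).
  { assert (Hz : is_derive (fun t => snd (F t)) x 0).
    { apply (is_derive_ext_loc (fun _ => 0)).
      - eapply filter_imp; [|exact Hloc]. intros t Ht; simpl. now rewrite (HF t Ht).
      - auto_derive; auto. }
    apply is_derive_unique in Hz. apply is_derive_unique in H2. congruence. }
  destruct (G x) as [g1 g2]; simpl in *; subst; reflexivity.
Qed.

Definition TP := list (Z * C).

Fixpoint evalT (P : TP) (x : R) : C :=
  match P with
  | nil => RtoC 0
  | p :: P' => Cplus (Cmult (snd p) (cexpi (IZR (fst p) * x))) (evalT P' x)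
  end.

Fixpoint coef (P : TP) (j : Z) : C :=
  match P with
  | nil => RtoC 0
  | p :: P' => Cplus (if Z.eq_dec (fst p) j then snd p else RtoC 0) (coef P' j)
  end.

Definition Acf (k : R) (d : R * R) : C := (k * fst d / 2, - (k * snd d) / 2).
Definition Bcf (k : R) (d : R * R) : C := (- (k * fst d) / 2, - (k * snd d) / 2).

Fixpoint Tr (k : R) (d : R * R) (hi : Z) (P : TP) : TP :=
  match P with
  | nil => nil
  | p :: P' => (fst p, Cmult (Cmult Ci (RtoC (IZR (fst p) - IZR hi))) (snd p))
               :: ((fst p + 1)%Z, Cmult (Acf k d) (snd p))
               :: ((fst p - 1)%Z, Cmult (Bcf k d) (snd p)) :: Tr k d hi P'
  end.

Lemma coef_Tr k d hi P j :
  coef (Tr k d hi P) j =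
  Cplus (Cmult (Cmult Ci (RtoC (IZR j - IZR hi))) (coef P j))
   (Cplus (Cmult (Acf k d) (coef P (j - 1))) (Cmult (Bcf k d) (coef P (j + 1)))).
Proof.
  induction P as [|[f c] P IH]; simpl.
  - apply injective_projections; simpl; ring.
  - rewrite IH.
    destruct (Z.eq_dec f j) as [e1|n1];
    destruct (Z.eq_dec (f+1) j) as [e2|n2];
    destruct (Z.eq_dec (f-1) j) as [e3|n3];
    destruct (Z.eq_dec f (j-1)) as [e4|n4];
    destruct (Z.eq_dec f (j+1)) as [e5|n5]; try lia; subst; ring.
Qed.

Lemma evalT_split P f x :
  evalT P x = Cplus (Cmult (coef P f) (cexpi (IZR f * x)))
                    (evalT (filter (fun p => negb (Z.eqb (fst p) f)) P) x).
Proof.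
  induction P as [|[g c] P IH]; simpl.
  - apply injective_projections; simpl; ring.
  - rewrite IH. destruct (Z.eq_dec g f) as [e|n].
    + subst. rewrite Z.eqb_refl. simpl. ring.
    + assert (Hb : Z.eqb g f = false) by (apply Z.eqb_neq; auto). rewrite Hb; simpl. ring.
Qed.

Lemma coef_filter P f j :
  coef (filter (fun p => negb (Z.eqb (fst p) f)) P) j = if Z.eq_dec j f then RtoC 0 else coef P j.
Proof.
  induction P as [|[g c] P IH]; simpl.
  - destruct (Z.eq_dec j f); auto.
  - destruct (Z.eqb g f) eqn:Hg; simpl.
    + apply Z.eqb_eq in Hg; subst. rewrite IH. destruct (Z.eq_dec j f); destruct (Z.eq_dec f j); try lia; ring.
    + apply Z.eqb_neq in Hg. rewrite IH. destruct (Z.eq_dec j f); destruct (Z.eq_dec g j); try lia; subst; try ring; contradiction.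

Qed.

Definition fz (P : TP) := forall j, coef P j = RtoC 0.

Lemma fz_eval_aux n : forall P, (length P <= n)%nat -> fz P -> forall x, evalT P x = RtoC 0.
Proof.
  induction n as [|n IH]; intros P Hl Hz x.
  - destruct P; simpl in *; [reflexivity| lia].
  - destruct P as [|[f c] P']; [reflexivity|].
    rewrite (evalT_split _ f). rewrite Hz.
    simpl filter. rewrite Z.eqb_refl. simpl negb. cbv iota.
    rewrite (IH (filter (fun p => negb (Z.eqb (fst p) f)) P')).
    + apply injective_projections; simpl; ring.
    + simpl in Hl. pose proof (filter_length_le (fun p => negb (Z.eqb (fst p) f)) P'). lia.
    + intro j. rewrite coef_filter. destruct (Z.eq_dec j f); [reflexivity|].
      specialize (Hz j). simpl in Hz. destruct (Z.eq_dec f j); [lia|].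
      rewrite <- Hz. apply injective_projections; simpl; ring.
Qed.

Lemma fz_eval P x : fz P -> evalT P x = RtoC 0.
Proof. intros H; apply (fz_eval_aux (length P)); auto. Qed.

Lemma single_eval P h x : (forall j, j <> h -> coef P j = RtoC 0) ->
  evalT P x = Cmult (coef P h) (cexpi (IZR h * x)).
Proof.
  intros H. rewrite (evalT_split _ h). rewrite fz_eval.
  - apply injective_projections; simpl; ring.
  - intro j. rewrite coef_filter. destruct (Z.eq_dec j h); auto.
Qed.

Lemma coef_in P j : coef P j <> RtoC 0 -> In j (map fst P).
Proof.
  induction P as [|[f c] P IH]; simpl; intros H.
  - now apply H.
  - destruct (Z.eq_dec f j); [left; auto|right; apply IH].
    intro E; apply H; rewrite E; apply injective_projections; simpl; ring.
Qed.

Lemma list_bounds (l : list Z) : exists lo hi, forall j, In j l -> (lo <= j <= hi)%Z.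
Proof.
  induction l as [|a l [lo [hi IH]]].
  - exists 0%Z, 0%Z; intros j [].
  - exists (Z.min a lo), (Z.max a hi). intros j [<-|Hj]; [lia|]. specialize (IH j Hj); lia.
Qed.

Definition supp (P : TP) (lo : Z) (n : nat) :=
  forall j, coef P j <> RtoC 0 -> (lo <= j < lo + Z.of_nat n)%Z.

Lemma supp_exists P : exists lo n, supp P lo n.
Proof.
  destruct (list_bounds (map fst P)) as [lo [hi H]].
  exists lo, (Z.to_nat (hi - lo + 1)). intros j Hj. specialize (H j (coef_in _ _ Hj)).
  rewrite Z2Nat.id by lia. lia.
Qed.

Lemma supp0_fz P lo : supp P lo 0 -> fz P.
Proof.
  intros H j. destruct (classic (coef P j = RtoC 0)) as [E|E]; auto.
  specialize (H j E). simpl in H. lia.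
Qed.

Lemma coef_Tr0 k d hi P j : fst d = 0 -> snd d = 0 ->
  coef (Tr k d hi P) j = Cmult (Cmult Ci (RtoC (IZR j - IZR hi))) (coef P j).
Proof.
  intros H1 H2. rewrite coef_Tr. unfold Acf, Bcf. rewrite H1, H2.
  apply injective_projections; simpl; field.
Qed.

Lemma Cmult_nz a b : a <> RtoC 0 -> b <> RtoC 0 -> Cmult a b <> RtoC 0.
Proof.
  intros Ha Hb E. apply (f_equal Cmod) in E. rewrite Cmod_mult, Cmod_0 in E.
  apply Cmod_gt_0 in Ha. apply Cmod_gt_0 in Hb. nra.
Qed.

Lemma Ci_diff_nz j hi : j <> hi -> Cmult Ci (RtoC (IZR j - IZR hi)) <> RtoC 0.
Proof.
  intros H E. apply (f_equal snd) in E. simpl in E.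
  apply H. apply eq_IZR. lra.
Qed.

Lemma supp_Tr_head k d lo n P : fst d = 0 -> snd d = 0 -> supp P lo (S n) ->
  supp (Tr k d (lo + Z.of_nat n) P) lo n.
Proof.
  intros H1 H2 Hs j Hj. rewrite coef_Tr0 in Hj by auto.
  destruct (Z.eq_dec j (lo + Z.of_nat n)) as [e|ne].
  - subst. exfalso; apply Hj. apply injective_projections; simpl; ring.
  - assert (coef P j <> RtoC 0) by (intro E; apply Hj; rewrite E; apply injective_projections; simpl; ring).
    specialize (Hs j H). lia.
Qed.

Lemma head_single k d hi P : fst d = 0 -> snd d = 0 -> fz (Tr k d hi P) ->
  forall j, j <> hi -> coef P j = RtoC 0.
Proof.
  intros H1 H2 Hz j Hj. specialize (Hz j). rewrite coef_Tr0 in Hz by auto.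
  destruct (classic (coef P j = RtoC 0)) as [E|E]; auto.
  exfalso. exact (Cmult_nz _ _ (Ci_diff_nz _ _ Hj) E Hz).
Qed.

Lemma find_max (p : Z -> Prop) n : forall U j0, p j0 -> (U - Z.of_nat n <= j0)%Z ->
  (forall j, p j -> (j <= U)%Z) -> exists j, p j /\ forall j', p j' -> (j' <= j)%Z.
Proof.
  induction n as [|n IH]; intros U j0 Hp Hl Hu.
  - exists j0; split; auto. intros j' Hj'. pose proof (Hu j' Hj'). pose proof (Hu j0 Hp). simpl in Hl. lia.
  - destruct (classic (p U)) as [HU|HU].
    + exists U; split; auto.
    + apply (IH (U - 1)%Z j0 Hp).
      * pose proof (Hu j0 Hp). assert (j0 <> U) by (intro; subst; auto).
        rewrite Nat2Z.inj_succ in Hl. lia.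
      * intros j Hj. pose proof (Hu j Hj). assert (j <> U) by (intro; subst; auto). lia.
Qed.

Lemma Tr_nz k d hi P : 0 < k -> ~ (fst d = 0 /\ snd d = 0) -> ~ fz P -> ~ fz (Tr k d hi P).
Proof.
  intros Hk Hd Hnz Hz. apply Hnz.
  destruct (classic (fz P)) as [F|F]; auto. exfalso.
  apply not_all_ex_not in F. destruct F as [j0 Hj0].
  destruct (list_bounds (map fst P)) as [lo [hi' Hb]].
  destruct (find_max (fun j => coef P j <> RtoC 0) (Z.to_nat (hi' - j0)) hi' j0 Hj0) as [m [Hm Hmax]].
  - pose proof (Hb j0 (coef_in _ _ Hj0)). rewrite Z2Nat.id by lia. lia.
  - intros j Hj. apply Hb. apply coef_in; auto.
  - assert (E1 : coef P (m + 1) = RtoC 0).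
    { destruct (classic (coef P (m+1) = RtoC 0)) as [E|E]; auto. specialize (Hmax _ E). lia. }
    assert (E2 : coef P (m + 1 + 1) = RtoC 0).
    { destruct (classic (coef P (m+1+1) = RtoC 0)) as [E|E]; auto. specialize (Hmax _ E). lia. }
    specialize (Hz (m + 1)%Z). rewrite coef_Tr in Hz.
    replace (m + 1 - 1)%Z with m in Hz by lia. rewrite E1, E2 in Hz.
    assert (HA : Acf k d <> RtoC 0).
    { unfold Acf; intro E. apply Hd. apply (f_equal fst) in E as E1'. apply (f_equal snd) in E as E2'.
      simpl in E1', E2'. split; nra. }
    apply (Cmult_nz _ _ HA Hm). rewrite <- Hz. apply injective_projections; simpl; ring.
Qed.

Definition th (k : R) (s : R * R) (x : R) : R := - (k * (fst s * cos x + snd s * sin x)).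
Definition sub2 (s s1 : R * R) : R * R := (fst s - fst s1, snd s - snd s1).

Lemma cexpi_add a b : cexpi (a + b) = Cmult (cexpi a) (cexpi b).
Proof. unfold cexpi. rewrite cos_plus, sin_plus. apply injective_projections; simpl; ring. Qed.

Lemma cexpi_cancel x b : Cmult (cexpi x) b = RtoC 0 -> b = RtoC 0.
Proof.
  intros H. replace b with (Cmult (cexpi (-x)) (Cmult (cexpi x) b)).
  - rewrite H. apply injective_projections; simpl; ring.
  - unfold cexpi. rewrite cos_neg, sin_neg. destruct b as [b1 b2].
    pose proof (sin2_cos2 x) as S. unfold Rsqr in S.
    apply injective_projections; simpl;
      [transitivity ((sin x * sin x + cos x * cos x) * b1) | transitivity ((sin x * sin x + cos x * cos x) * b2)];
      try (rewrite S; ring); ring.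
Qed.

Lemma term_CD k d hi P x :
  CD (fun t => Cmult (evalT P t) (cexpi (th k d t)))
     (fun t => Cplus (Cmult (evalT (Tr k d hi P) t) (cexpi (th k d t)))
                     (Cmult (Cmult Ci (RtoC (IZR hi))) (Cmult (evalT P t) (cexpi (th k d t))))) x.
Proof.
  induction P as [|[f c] P IH].
  - eapply CD_ext; [| |apply (CD_zero x)].
    + intro t; simpl; apply injective_projections; simpl; ring.
    + simpl; apply injective_projections; simpl; ring.
  - set (dpsi := IZR f + k * (fst d * sin x - snd d * cos x)).
    assert (Hp : is_derive (fun t => IZR f * t + th k d t) x dpsi).
    { unfold th, dpsi. auto_derive; auto. ring. }
    pose proof (CD_plus _ _ _ _ x (CD_atom c _ _ x Hp) IH) as H.
    eapply CD_ext; [| |exact H].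
    + intro t. simpl. rewrite cexpi_add. destruct c as [c1 c2].
      destruct (evalT P t) as [e1 e2]. unfold cexpi.
      apply injective_projections; simpl; ring.
    + simpl. rewrite !cexpi_add. rewrite !plus_IZR, !minus_IZR.
      replace ((IZR f + IZR 1) * x) with (IZR f * x + x) by (simpl; ring).
      replace ((IZR f - IZR 1) * x) with (IZR f * x + - x) by (simpl; ring).
      rewrite !cexpi_add. unfold dpsi, th, Acf, Bcf, cexpi.
      rewrite !cos_neg, !sin_neg.
      destruct c as [c1 c2].
      destruct (evalT P x) as [e1 e2]. destruct (evalT (Tr k d hi P) x) as [g1 g2].
      apply injective_projections; simpl; field.
Qed.

Definition Fsum (k : R) (L : list (TP * (R * R))) (x : R) : C :=
  fold_right (fun p acc => Cplus (Cmult (evalT (fst p) x) (cexpi (th k (snd p) x))) acc) (RtoC 0) L.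

Definition Gh (k : R) (s1 : R * R) (L : list (TP * (R * R))) (x : R) : C :=
  fold_right (fun p acc => Cplus (Cmult (evalT (fst p) x) (cexpi (th k (sub2 (snd p) s1) x))) acc) (RtoC 0) L.

Definition Gder (k : R) (s1 : R * R) (hi : Z) (L : list (TP * (R * R))) (x : R) : C :=
  fold_right (fun p acc => Cplus (Cmult (evalT (Tr k (sub2 (snd p) s1) hi (fst p)) x)
                                        (cexpi (th k (sub2 (snd p) s1) x))) acc) (RtoC 0) L.

Definition Tmap (k : R) (s1 : R * R) (hi : Z) (L : list (TP * (R * R))) :=
  map (fun p => (Tr k (sub2 (snd p) s1) hi (fst p), snd p)) L.

Lemma th_split k s s1 x : cexpi (th k s x) = Cmult (cexpi (th k s1 x)) (cexpi (th k (sub2 s s1) x)).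
Proof.
  rewrite <- cexpi_add. f_equal. unfold th, sub2; simpl; ring.
Qed.

Lemma Fsum_Gh k s1 L x : Fsum k L x = Cmult (cexpi (th k s1 x)) (Gh k s1 L x).
Proof.
  induction L as [|p L IH]; simpl.
  - apply injective_projections; simpl; ring.
  - rewrite IH, (th_split k (snd p) s1). ring.
Qed.

Lemma Fsum_Tmap k s1 hi L x : Fsum k (Tmap k s1 hi L) x = Cmult (cexpi (th k s1 x)) (Gder k s1 hi L x).
Proof.
  induction L as [|p L IH]; simpl.
  - apply injective_projections; simpl; ring.
  - rewrite IH, (th_split k (snd p) s1). ring.
Qed.

Lemma Gh_CD k s1 hi L x :
  CD (Gh k s1 L) (fun t => Cplus (Gder k s1 hi L t) (Cmult (Cmult Ci (RtoC (IZR hi))) (Gh k s1 L t))) x.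
Proof.
  induction L as [|p L IH].
  - eapply CD_ext; [| |apply (CD_zero x)].
    + intro t; reflexivity.
    + simpl; apply injective_projections; simpl; ring.
  - pose proof (CD_plus _ _ _ _ x (term_CD k (sub2 (snd p) s1) hi (fst p) x) IH) as H.
    eapply CD_ext; [| |exact H].
    + intro t; reflexivity.
    + simpl. ring.
Qed.

Lemma transform k s1 hi L a b :
  (forall x, a < x < b -> Fsum k L x = RtoC 0) ->
  forall x, a < x < b -> Fsum k (Tmap k s1 hi L) x = RtoC 0.
Proof.
  intros HL x Hx.
  assert (HG : forall t, a < t < b -> Gh k s1 L t = RtoC 0).
  { intros t Ht. apply (cexpi_cancel (th k s1 t)). rewrite <- Fsum_Gh. auto. }
  pose proof (CD_zero_on _ _ a b x HG Hx (Gh_CD k s1 hi L x)) as H.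
  simpl in H. rewrite (HG x Hx) in H.
  rewrite Fsum_Tmap.
  replace (Gder k s1 hi L x) with (RtoC 0).
  - apply injective_projections; simpl; ring.
  - rewrite <- H. apply injective_projections; simpl; ring.
Qed.

Lemma Fsum_fz k L x : (forall p, In p L -> fz (fst p)) -> Fsum k L x = RtoC 0.
Proof.
  induction L as [|p L IH]; intros H; simpl; [reflexivity|].
  rewrite IH by (intros q Hq; apply H; right; auto).
  rewrite (fz_eval _ _ (H p (or_introl eq_refl))).
  apply injective_projections; simpl; ring.
Qed.

Lemma main_ind k a b (Hk : 0 < k) (Hab : a < b) : forall m L, length L = m ->
  NoDup (map snd L) -> (forall x, a < x < b -> Fsum k L x = RtoC 0) ->
  forall p, In p L -> fz (fst p).
Proof.
  induction m as [|m IHm]; intros L HlL Hnd HF.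
  - destruct L; simpl in *; [intros p []| lia].
  - destruct L as [|[P1 s1] rest]; [simpl in HlL; lia|]. simpl in HlL. injection HlL as Hlr.
    simpl in Hnd. apply NoDup_cons_iff in Hnd as [Hns1 Hndr].
    assert (Inner : forall n P lo rest', length rest' = m -> map snd rest' = map snd rest ->
              supp P lo n -> (forall x, a < x < b -> Fsum k ((P, s1) :: rest') x = RtoC 0) ->
              forall q, In q ((P, s1) :: rest') -> fz (fst q)).
    { induction n as [|n IHn]; intros P lo rest' Hl Hmap Hs HF' q Hq.
      - pose proof (supp0_fz _ _ Hs) as HP.
        assert (Hr : forall q, In q rest' -> fz (fst q)).
        { apply (IHm rest' Hl); [rewrite Hmap; auto|].
          intros x Hx. rewrite <- (HF' x Hx). simpl. rewrite (fz_eval _ _ HP).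
          apply injective_projections; simpl; ring. }
        destruct Hq as [<-|Hq]; auto.
      - set (hi := (lo + Z.of_nat n)%Z).
        assert (Hd0 : fst (sub2 s1 s1) = 0 /\ snd (sub2 s1 s1) = 0) by (unfold sub2; simpl; split; ring).
        assert (R' : forall q, In q ((Tr k (sub2 s1 s1) hi P, s1) :: Tmap k s1 hi rest') -> fz (fst q)).
        { apply (IHn (Tr k (sub2 s1 s1) hi P) lo (Tmap k s1 hi rest')).
          - unfold Tmap; rewrite length_map; auto.
          - unfold Tmap; rewrite map_map; simpl. rewrite <- Hmap. apply map_ext; auto.
          - apply supp_Tr_head; tauto.
          - intros x Hx. exact (transform k s1 hi ((P, s1) :: rest') a b HF' x Hx). }
        assert (Hr : forall q, In q rest' -> fz (fst q)).
        { intros q' Hq'.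
          assert (Hin : In (Tr k (sub2 (snd q') s1) hi (fst q'), snd q') ((Tr k (sub2 s1 s1) hi P, s1) :: Tmap k s1 hi rest')).
          { simpl; right. unfold Tmap. apply (in_map (fun p => (Tr k (sub2 (snd p) s1) hi (fst p), snd p))). auto. }
          pose proof (R' _ Hin) as Hz. simpl in Hz.
          destruct (classic (fz (fst q'))) as [Y|N]; auto. exfalso.
          refine (Tr_nz k (sub2 (snd q') s1) hi (fst q') Hk _ N Hz).
          intros [E1 E2]. apply Hns1. rewrite <- Hmap. 
          replace s1 with (snd q'). { apply in_map; auto. }
          destruct q' as [P' [u v]]. destruct s1 as [u1 v1]. unfold sub2 in *; simpl in *.
          f_equal; lra. }
        assert (Hh : fz (Tr k (sub2 s1 s1) hi P)).
        { apply (R' (Tr k (sub2 s1 s1) hi P, s1)). simpl; left; reflexivity. }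
        pose proof (head_single _ _ _ _ (proj1 Hd0) (proj2 Hd0) Hh) as Hsg.
        assert (HPz : fz P).
        { set (x0 := (a + b) / 2).
          assert (Hx0 : a < x0 < b) by (unfold x0; lra).
          pose proof (HF' x0 Hx0) as E. simpl in E.
          rewrite (Fsum_fz k rest' x0 Hr) in E.
          rewrite (single_eval P hi x0 Hsg) in E.
          assert (Ec : coef P hi = RtoC 0).
          { apply (cexpi_cancel (IZR hi * x0)). apply (cexpi_cancel (th k s1 x0)).
            rewrite <- E. apply injective_projections; simpl; ring. }
          intro j. destruct (Z.eq_dec j hi) as [->|ne]; auto. }
        destruct Hq as [<-|Hq]; auto. }
    destruct (supp_exists P1) as [lo [n Hs]].
    apply (Inner n P1 lo rest Hlr eq_refl Hs HF).
Qed.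

Lemma abs_sin_le h : Rabs h < 1 -> Rabs (sin h) <= Rabs h.
Proof.
  intros H. pose proof PI2_1.
  destruct (Rtotal_order h 0) as [Hn|[Hz|Hp]].
  - pose proof (sin_lt_x (-h) ltac:(lra)) as S. rewrite sin_neg in S.
    assert (0 <= sin (-h)) by (apply sin_ge_0; rewrite Rabs_left in H; lra).
    rewrite sin_neg in H1. rewrite Rabs_left1 by lra. rewrite Rabs_left by lra. lra.
  - subst. rewrite sin_0, Rabs_R0. lra.
  - pose proof (sin_lt_x h Hp) as S.
    assert (0 <= sin h) by (apply sin_ge_0; rewrite Rabs_right in H; lra).
    rewrite !Rabs_right by lra. lra.
Qed.

Lemma param kp km x : 0 < kp -> 0 < km ->
  Rabs (x - 3 * (PI / 2)) < Rmin (kp / km) 1 / 2 ->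
  exists t, Shat kp km (cos t, sin t) /\ vv kp km (cos t, sin t) = (cos x, sin x) /\
            QQ kp km (cos t, sin t) <> 0.
Proof.
  intros Hkp Hkm Hx.
  set (m := kp / km). assert (Hm : 0 < m) by (unfold m; apply Rdiv_lt_0_compat; auto).
  pose proof (Rmin_l m 1) as Hm1. pose proof (Rmin_r m 1) as Hm2. fold m in Hx.
  pose proof PI2_1 as HPI.
  set (h := x - 3 * (PI / 2)). fold h in Hx.
  assert (Hcx : cos x = sin h).
  { replace x with (h + 3 * (PI / 2)) by (unfold h; ring). rewrite cos_plus, cos_3PI2, sin_3PI2.
    unfold h; replace (x - 3 * (PI / 2) + 3 * (PI / 2)) with x by ring. ring. }
  assert (Hc : Rabs (cos x) < Rmin m 1 / 2).
  { rewrite Hcx. eapply Rle_lt_trans; [apply abs_sin_le|exact Hx]. lra. }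
  apply Rabs_def2 in Hc. apply Rabs_def2 in Hx. unfold h in Hx.
  assert (Hsx : sin x < 0) by (apply sin_lt_0; lra).
  set (u := cos x / m).
  assert (Hu : u * m = cos x) by (unfold u; field; lra).
  assert (Hu1 : -1/2 < u < 1/2) by (split; nra).
  set (t := 2 * PI - acos u).
  assert (Hu2 : -1 <= u <= 1) by lra.
  assert (Hct : cos t = u).
  { unfold t. rewrite cos_minus, cos_2PI, sin_2PI, cos_acos by auto. ring. }
  assert (Hst : sin t = - sqrt (1 - u²)).
  { unfold t. rewrite sin_minus, cos_2PI, sin_2PI, sin_acos by auto. ring. }
  assert (Hst0 : sin t < 0).
  { rewrite Hst. assert (0 < sqrt (1 - u²)); [apply sqrt_lt_R0; unfold Rsqr; nra|lra]. }
  assert (Hvv : vv kp km (cos t, sin t) = (cos x, sin x)).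
  { unfold vv, mu. cbn [fst snd]. fold m. f_equal.
    - rewrite Hct. rewrite <- Hu. ring.
    - unfold sgn. destruct (Rlt_dec 0 (sin t)) as [H|_]; [lra|].
      destruct (Rlt_dec (sin t) 0) as [_|H]; [|lra].
      replace (1 - m ^ 2 * cos t ^ 2) with (sin x)².
      + rewrite sqrt_Rsqr_abs, Rabs_left by lra. ring.
      + rewrite Hct. pose proof (sin2_cos2 x) as S. rewrite <- Hu in S. unfold Rsqr in *. nra. }
  exists t. split; [|split; [exact Hvv|]].
  - exists t. split; [|reflexivity]. unfold theta_c.
    destruct (Rlt_dec km kp) as [Hlt|Hge].
    + set (w := km / kp).
      assert (Hw : 0 < w < 1).
      { unfold w; split; [apply Rdiv_lt_0_compat; auto|]. apply (Rmult_lt_reg_r kp); [lra|].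
        unfold Rdiv; rewrite Rmult_assoc, Rinv_l by lra. lra. }
      assert (Huw : u = cos x * w) by (unfold u, w, m; field; lra).
      pose proof (COS_bound x) as Cb.
      assert (Hcx1 : -1 < cos x < 1) by lra.
      assert (Hlo : u < w) by nra. assert (Hhi : - w < u) by nra.
      pose proof (acos_bound u). pose proof (acos_bound w). pose proof (acos_bound (-w)).
      assert (A1 : acos w < acos u).
      { apply cos_decreasing_0; try lra. rewrite !cos_acos; lra. }
      assert (A2 : acos u < acos (- w)).
      { apply cos_decreasing_0; try lra. rewrite !cos_acos; lra. }
      rewrite acos_opp in A2. unfold t. lra.
    + pose proof (acos_bound_lt u ltac:(lra)). unfold t. lra.
  - unfold QQ. rewrite Hvv. unfold mu; cbn [fst snd]. fold m. intro E.
    unfold Rdiv in E. apply Rmult_integral in E. destruct E as [E|E].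
    + nra.
    + revert E. apply Rinv_neq_0_compat. nra.
Qed.

Definition Pl (c d1 d2 : C) : TP :=
  (0%Z, c) :: (1%Z, ((fst d1 + snd d2) / 2, (snd d1 - fst d2) / 2))
  :: ((-1)%Z, ((fst d1 - snd d2) / 2, (snd d1 + fst d2) / 2)) :: nil.

Lemma evalT_Pl c d1 d2 x :
  evalT (Pl c d1 d2) x = Cplus c (Cplus (Cmult d1 (RtoC (cos x))) (Cmult d2 (RtoC (sin x)))).
Proof.
  unfold Pl, evalT, cexpi. cbn [fst snd].
  replace (IZR 0 * x) with 0 by (simpl; ring).
  replace (IZR 1 * x) with x by (simpl; ring).
  replace (IZR (-1) * x) with (- x) by (simpl; ring).
  rewrite cos_0, sin_0, cos_neg, sin_neg.
  destruct c as [c1 c2], d1 as [p q], d2 as [r s].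
  apply injective_projections; simpl; field.
Qed.

Lemma sum_eq (F : nat -> C) (Q : R) (G : nat -> TP * (R * R)) km x ls :
  (forall l, F l = Cmult (RtoC Q) (Cmult (evalT (fst (G l)) x) (cexpi (th km (snd (G l)) x)))) ->
  fold_right Cplus (RtoC 0) (map F ls) = Cmult (RtoC Q) (Fsum km (map G ls) x).
Proof.
  intros H. induction ls as [|l ls IH]; simpl.
  - apply injective_projections; simpl; ring.
  - rewrite IH, H. ring.
Qed.

Theorem lemmaA1 (kp km : R) (Hkp : 0 < kp) (Hkm : 0 < km)
  (M : nat) (s : nat -> R * R)
  (Hs_lower : forall l, (l < M)%nat -> snd (s l) < 0)
  (Hs_dist : forall l m, (l < M)%nat -> (m < M)%nat -> l <> m -> s l <> s m)
  (c d1 d2 : nat -> C)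
  (Hcomb : forall a, Shat kp km a ->
     Csum M (fun l => Cplus (Cmult (c l) (g_fun kp km (s l) a))
                      (Cplus (Cmult (d1 l) (h_fun kp km (s l) 1 a))
                             (Cmult (d2 l) (h_fun kp km (s l) 2 a))))
     = RtoC 0) :
  forall l, (l < M)%nat -> c l = RtoC 0 /\ d1 l = RtoC 0 /\ d2 l = RtoC 0.
Proof.
  intros l0 Hl0.
  set (del := Rmin (kp / km) 1 / 2).
  assert (Hdel : 0 < del).
  { unfold del. apply Rdiv_lt_0_compat; [|lra]. apply Rmin_pos; [apply Rdiv_lt_0_compat|]; lra. }
  set (G := fun l => (Pl (c l) (d1 l) (d2 l), s l)).
  set (L := map G (seq 0 M)).
  assert (HF : forall x, 3 * (PI / 2) - del < x < 3 * (PI / 2) + del -> Fsum km L x = RtoC 0).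
  { intros x Hx. unfold L.
    destruct (param kp km x Hkp Hkm) as [t [Hsh [Hvv HQ]]].
    { apply Rabs_def1; fold del; lra. }
    pose proof (Hcomb _ Hsh) as H. unfold Csum in H.
    rewrite (sum_eq _ (QQ kp km (cos t, sin t)) G km x) in H.
    - apply (f_equal (Cmult (RtoC (/ QQ kp km (cos t, sin t))))) in H.
      rewrite Cmult_assoc in H.
      replace (Cmult (RtoC (/ QQ kp km (cos t, sin t))) (RtoC (QQ kp km (cos t, sin t)))) with (RtoC 1) in H.
      + rewrite Cmult_1_l in H. rewrite H. apply injective_projections; simpl; ring.
      + unfold RtoC, Cmult; simpl. apply injective_projections; simpl; field; auto.
    - intro l. unfold G; cbn [fst snd]. rewrite evalT_Pl.
      unfold h_fun, g_fun. rewrite Hvv. unfold e_q, dot2; cbn [fst snd Nat.eqb].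
      replace (- (km * (cos x * fst (s l) + sin x * snd (s l)))) with (th km (s l) x)
        by (unfold th; ring).
      destruct (c l) as [c1 c2], (d1 l) as [p q], (d2 l) as [r w], (cexpi (th km (s l) x)) as [e1 e2].
      apply injective_projections; simpl; ring. }
  assert (Hnd : NoDup (map snd L)).
  { unfold L. rewrite map_map. unfold G; cbn [snd].
    apply NoDup_map_NoDup_ForallPairs; [|apply seq_NoDup].
    intros i j Hi Hj E. apply in_seq in Hi, Hj.
    destruct (Nat.eq_dec i j); auto. exfalso. apply (Hs_dist i j); try lia; auto. }
  pose proof (PI2_1).
  assert (Hall := main_ind km (3 * (PI / 2) - del) (3 * (PI / 2) + del) Hkm ltac:(lra)
                   (length L) L eq_refl Hnd HF (G l0)).
  assert (Hin : In (G l0) L) by (unfold L; apply in_map, in_seq; lia).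
  specialize (Hall Hin). unfold G in Hall; cbn [fst] in Hall.
  pose proof (Hall 0%Z) as H0. pose proof (Hall 1%Z) as H1. pose proof (Hall (-1)%Z) as H2.
  unfold Pl, coef in H0, H1, H2. cbn [fst snd] in H0, H1, H2.
  destruct (Z.eq_dec 0 0); [|lia]. destruct (Z.eq_dec 1 0); [lia|]. destruct (Z.eq_dec (-1) 0); [lia|].
  destruct (Z.eq_dec 0 1); [lia|]. destruct (Z.eq_dec 1 1); [|lia]. destruct (Z.eq_dec (-1) 1); [lia|].
  destruct (Z.eq_dec 0 (-1)); [lia|]. destruct (Z.eq_dec 1 (-1)); [lia|]. destruct (Z.eq_dec (-1) (-1)); [|lia].
  destruct (c l0) as [c1 c2], (d1 l0) as [p q], (d2 l0) as [r w].
  cbn [fst snd] in *.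
  apply (f_equal fst) in H0 as H0a. apply (f_equal snd) in H0 as H0b.
  apply (f_equal fst) in H1 as H1a. apply (f_equal snd) in H1 as H1b.
  apply (f_equal fst) in H2 as H2a. apply (f_equal snd) in H2 as H2b.
  simpl in H0a, H0b, H1a, H1b, H2a, H2b.
  split; [|split]; apply injective_projections; simpl; lra.
Qed.
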